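(* Let $T=(V,E)$ be a tree on $n$ vertices, let $f=\{i,j\}$ be a pair of vertices with $d_{i,j}=d>1$, and let $B=E\cup\{f\}$. Then the eigenvalues of $\mathrm{Min4PC}_T[B,B]$ are $-2$ with multiplicity $n-3$, together with the three roots of the cubic polynomial $$g(x)=x^3-(2n-6)x^2-(nd^2-5d^2+2nd-2d+5n-9)x-2(d-1)^2(n-1).$$
   Context: $d_{i,j}$ is the distance in $T$ between vertices $i,j$; $\mathcal{V}_2$ is the set of 2-element subsets of $V$ (edges regarded as elements of $\mathcal{V}_2$). $\mathrm{Min4PC}_T$ is the $\binom n2\times\binom n2$ matrix indexed by $\mathcal{V}_2$ whose entry in row $\{i,j\}$, column $\{k,l\}$ is $\min\{d_{i,l}+d_{j,k},\ d_{i,k}+d_{j,l},\ d_{i,j}+d_{k,l}\}$. $M[B,B]$ denotes the principal submatrix with rows and columns indexed by $B$. *)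

(* Defs.v *)
From HB Require Import structures.
From mathcomp Require Import all_boot all_order all_algebra.
Set Implicit Arguments. Unset Strict Implicit. Unset Printing Implicit Defensive.
Import Order.TTheory GRing.Theory Num.Theory.

Definition edge_set n (e : rel 'I_n) : {set {set 'I_n}} :=
  [set [set x; y] | x in 'I_n, y in 'I_n & e x y].

Definition is_tree n (e : rel 'I_n) : Prop :=
  [/\ symmetric e, irreflexive e,
      (forall x y, connect e x y) & #|edge_set e| = n.-1].

Fixpoint within n (e : rel 'I_n) (k : nat) (x y : 'I_n) : bool :=
  if k is k'.+1 then within e k' x y || [exists z, within e k' x z && e z y]
  else x == y.

(* graph distance: least k with a walk of length k (any graph distance
   in a connected graph on n vertices is < n) *)
Definition dist n (e : rel 'I_n) (x y : 'I_n) : nat :=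
  find (fun k => within e k x y) (iota 0 n).

Definition V2 n : {set {set 'I_n}} := [set S : {set 'I_n} | #|S| == 2].

Definition min4pc n (e : rel 'I_n) (S U : {set 'I_n}) : nat :=
  match enum S, enum U with
  | [:: i; j], [:: k; l] =>
      minn (minn (dist e i l + dist e j k) (dist e i k + dist e j l))
           (dist e i j + dist e k l)
  | _, _ => 0
  end.

Local Open Scope ring_scope.

Definition min4pc_sub (R : nzRingType) n (e : rel 'I_n) (B : {set {set 'I_n}})
  : 'M[R]_#|B| :=
  \matrix_(a < #|B|, b < #|B|) (min4pc e (enum_val a) (enum_val b))%:R.

(* Main.v *)
Require Import Defs.
From HB Require Import structures.
From mathcomp Require Import all_boot all_order all_algebra.
From mathcomp Require Import zify ring.
Import Order.TTheory GRing.Theory Num.Theory.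
Section Graph.
Variables (n : nat) (e : rel 'I_n).
Hypothesis tree : is_tree e.

Local Notation D := (dist e).

Lemma esym : symmetric e. Proof. by case: tree. Qed.
Lemma eirr : irreflexive e. Proof. by case: tree. Qed.
Lemma econn x y : connect e x y. Proof. by case: tree. Qed.

Lemma within_S k x y : within e k x y -> within e k.+1 x y.
Proof. by move=> h; rewrite /= h. Qed.

Lemma within_le k k' x y : (k <= k')%N -> within e k x y -> within e k' x y.
Proof.
move=> le; elim: k' le => [|k' IH]; first by rewrite leqn0 => /eqP ->.
rewrite leq_eqVlt => /orP[/eqP -> //|]; rewrite ltnS => /IH h /h; exact: within_S.
Qed.

Lemma within_front k w x y : e w x -> within e k x y -> within e k.+1 w y.
Proof.
move=> ewx; elim: k y => [|k IH] y.
  by move=> /eqP <-; apply/orP; right; apply/existsP; exists w; rewrite eqxx ewx.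
move=> /orP[h|/existsP[z /andP[h ezy]]]; apply/orP; first by left; exact: IH.
by right; apply/existsP; exists z; apply/andP; split; [exact: IH | done].
Qed.

Lemma within_trans k1 k2 x y z :
  within e k1 x y -> within e k2 y z -> within e (k1 + k2) x z.
Proof.
move=> h1; elim: k2 z => [|k2 IH] z; first by move=> /eqP <-; rewrite addn0.
rewrite addnS; move=> /orP[h|/existsP[u /andP[h eu]]]; apply/orP; first by left; exact: IH.
by right; apply/existsP; exists u; apply/andP; split; [exact: IH | done].
Qed.

Lemma within_sym k x y : within e k x y -> within e k y x.
Proof.
elim: k y => [|k IH] y; first by rewrite /= eq_sym.
move=> /orP[h|/existsP[z /andP[h ezy]]]; first by apply: within_S; exact: IH.
by apply: within_front (IH _ h); rewrite esym.
Qed.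

Lemma within_path x p : path e x p -> within e (size p) x (last x p).
Proof.
elim: p x => [|y p IH] x /=; first by move=> _; exact: eqxx.
by case/andP=> exy /IH; apply: within_front.
Qed.

Lemma n_gt0 (x : 'I_n) : (0 < n)%N.
Proof. by case: x => m; case: n => //. Qed.

Lemma within_all x y : within e n.-1 x y.
Proof.
case/connectP: (econn x y) => p pth ->; case: (shortenP pth) => p' pp' up' _.
apply: (@within_le (size p')); last exact: within_path pp'.
have := max_card (mem (x :: p')); rewrite card_ord (card_uniqP _) // /=.
by move=> h; rewrite -ltnS prednK // (n_gt0 x).
Qed.

Lemma Dle k x y : within e k x y -> (D x y <= k)%N.
Proof.
move=> h; rewrite /dist; case: (ltnP k n) => kn.
  rewrite leqNgt; apply/negP => /(before_find 0).
  by rewrite (nth_iota _ _ kn) add0n h.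
by apply: leq_trans (find_size _ _) _; rewrite size_iota.
Qed.

Lemma D_has x y : has (fun k => within e k x y) (iota 0 n).
Proof.
apply/hasP; exists n.-1; last exact: within_all.
by rewrite mem_iota add0n prednK ?leqnn // (n_gt0 x).
Qed.

Lemma Dlt x y : (D x y < n)%N.
Proof. by have := D_has x y; rewrite has_find size_iota. Qed.

Lemma Dwithin x y : within e (D x y) x y.
Proof.
have := nth_find 0 (D_has x y); rewrite nth_iota ?add0n //.
exact: Dlt.
Qed.

Lemma D0 x : D x x = 0.
Proof. by apply/eqP; rewrite -leqn0; apply: Dle; exact: eqxx. Qed.

Lemma D0E {x y} : D x y = 0 -> x = y.
Proof. by move=> h; have := Dwithin x y; rewrite h => /eqP. Qed.

Lemma Dsym x y : D x y = D y x.
Proof.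
by apply/eqP; rewrite eqn_leq !Dle // within_sym // Dwithin.
Qed.

Lemma Dtri x y z : (D x z <= D x y + D y z)%N.
Proof. by apply: Dle; apply: within_trans (Dwithin _ _) (Dwithin _ _). Qed.

Lemma Dedge {x y} : e x y -> D x y = 1.
Proof.
move=> exy; apply/eqP; rewrite eqn_leq; apply/andP; split.
  apply: Dle => /=; apply/orP; right; apply/existsP; exists x; by rewrite eqxx exy.
rewrite lt0n; apply/eqP => /D0E h; by rewrite h eirr in exy.
Qed.

Lemma D1E {x y} : D x y = 1 -> e x y.
Proof.
move=> h; have := Dwithin x y; rewrite h /=.
case/orP=> [/eqP xy|/existsP[z /andP[/eqP <- //]]].
by rewrite xy D0 in h.
Qed.

Lemma Dpred {x y k} : D x y = k.+1 -> exists2 z, e z y & D x z = k.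
Proof.
move=> h; have := Dwithin x y; rewrite h /=.
case/orP=> [/Dle|/existsP[z /andP[hz ezy]]]; first by rewrite h ltnn.
exists z => //; apply/eqP; rewrite eqn_leq Dle //=.
by have := Dtri x z y; rewrite h (Dedge ezy) addn1 ltnS.
Qed.

Definition goodp r (p : 'I_n -> 'I_n) :=
  forall x, x != r -> e x (p x) /\ (D r (p x)).+1 = D r x.

Lemma exists_goodp r : exists p, goodp r p.
Proof.
exists (fun x => odflt x [pick y | e x y && ((D r y).+1 == D r x)]).
move=> x xr.
have [k hk] : exists k, D r x = k.+1.
  case h: (D r x) => [|k]; last by exists k.
  by move/D0E: h => h; rewrite h eqxx in xr.
case: (Dpred hk) => z ezx hz.
case: pickP => [y /andP[exy /eqP hy] // | /(_ z)] /=.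
by rewrite esym ezx hz hk eqxx.
Qed.

Lemma in_edge_set {x y} : e x y -> [set x; y] \in edge_set e.
Proof. by move=> exy; apply/imset2P; exists x y; rewrite ?inE. Qed.

Lemma card_edges : #|edge_set e| = n.-1.
Proof. by case: tree. Qed.

Lemma image_edges {r p} : goodp r p -> edge_set e = [set [set x; p x] | x in [set~ r]].
Proof.
move=> gp; apply/eqP; rewrite eq_sym eqEcard; apply/andP; split.
  apply/subsetP => S /imsetP[x]; rewrite !inE => xr ->.
  by case: (gp x xr) => h _; exact: in_edge_set.
rewrite card_edges card_in_imset ?cardsC1 ?card_ord //.
move=> x y; rewrite !inE => xr yr h.
apply/eqP; apply/negP => /negP xy.
have : x \in [set y; p y] by rewrite -h set21.
rewrite !inE (negbTE xy) /= => /eqP xpy.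
have : y \in [set x; p x] by rewrite h set21.
rewrite !inE eq_sym (negbTE xy) /= => /eqP ypx.
case: (gp x xr) => _; case: (gp y yr) => _; rewrite -xpy -ypx => h1 h2.
lia.
Qed.

Lemma edge_par r {a b} : e a b -> D r a = (D r b).+1 \/ D r b = (D r a).+1.
Proof.
move=> eab; case: (exists_goodp r) => p gp.
have := in_edge_set eab; rewrite (image_edges gp) => /imsetP[z]; rewrite !inE => zr hS.
case: (gp z zr) => _ hz.
have ha : a \in [set z; p z] by rewrite -hS set21.
have hb : b \in [set z; p z] by rewrite -hS set22.
have ab : a != b by apply/eqP => h; rewrite h eirr in eab.
move: ha hb ab; rewrite !inE => /orP[]/eqP-> /orP[]/eqP->; rewrite ?eqxx //; by [left | right].
Qed.

Lemma uniq_parent r x y1 y2 : e x y1 -> e x y2 ->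
  (D r y1).+1 = D r x -> (D r y2).+1 = D r x -> y1 = y2.
Proof.
move=> e1 e2 h1 h2; case: (exists_goodp r) => p gp.
pose p' z := if z == x then y1 else p z.
have gp' : goodp r p'.
  by move=> z zr; rewrite /p'; case: eqP => [->|_]; [split | exact: gp].
have := in_edge_set e2; rewrite (image_edges gp') => /imsetP[z]; rewrite !inE => zr hS.
have hx : x \in [set z; p' z] by rewrite -hS set21.
have hy : y2 \in [set z; p' z] by rewrite -hS set22.
case: (gp' z zr) => _ hz.
rewrite /p' in hx hy hz.
case: (eqVneq z x) hx hy hz => [->|zx].
  rewrite !inE => _ /orP[/eqP h|/eqP //] _.
  by rewrite h eirr in e2.
rewrite !inE eq_sym (negbTE zx) /= => /eqP xpz /orP[/eqP y2z|/eqP y2pz].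
  by rewrite -xpz -y2z => h; lia.
by rewrite y2pz -xpz eirr in e2.
Qed.

Lemma Dparity r x y : odd (D r y) = odd (D r x + D x y).
Proof.
move: {2}(D x y) (erefl (D x y)) => k.
elim: k y => [|k IH] y hk; first by rewrite (D0E hk) D0 addn0.
case: (Dpred hk) => z ezy hz.
rewrite hk addnS /=; have := IH z hz; rewrite hz.
by case: (edge_par r ezy) => -> /=; [move=> <-; rewrite negbK | move=> ->].
Qed.

Lemma inj_edges r p : goodp r p -> {in [set~ r] &, injective (fun x => [set x; p x])}.
Proof.
move=> gp x y; rewrite !inE => xr yr h.
apply/eqP; apply/negP => /negP xy.
have : x \in [set y; p y] by rewrite -h set21.
rewrite !inE (negbTE xy) /= => /eqP xpy.
have : y \in [set x; p x] by rewrite h set21.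
rewrite !inE eq_sym (negbTE xy) /= => /eqP ypx.
case: (gp x xr) => _; case: (gp y yr) => _; rewrite -xpy -ypx => h1 h2.
lia.
Qed.

Definition m4 a b c d' :=
  minn (minn (D a d' + D b c) (D a c + D b d')) (D a b + D c d').

Lemma enum_set2 {x y : 'I_n} : x != y ->
  enum [set x; y] = [:: x; y] \/ enum [set x; y] = [:: y; x].
Proof.
move=> xy.
have hs : size (enum [set x; y]) = 2 by rewrite -cardE cards2 xy.
have hu := enum_uniq (mem [set x; y]).
have hm : forall z, z \in enum [set x; y] -> (z == x) || (z == y).
  by move=> z; rewrite mem_enum !inE.
move: hs hu hm; case: (enum _) => [|a [|b [|c s]]] // _.
rewrite /= inE andbT => ab hm.
have hb : b \in [:: a; b] by rewrite !inE eqxx orbT.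
case/orP: (hm a (mem_head _ _)) => /eqP ea;
case/orP: (hm b hb) => /eqP eb;
  subst a b; rewrite ?eqxx // in ab; by [left | right].
Qed.

Lemma min4pc_set2 a b c d' : a != b -> c != d' ->
  min4pc e [set a; b] [set c; d'] = m4 a b c d'.
Proof.
move=> ab cd; rewrite /min4pc /m4.
have h1 := Dsym a b; have h2 := Dsym c d'.
by case: (enum_set2 ab) => ->; case: (enum_set2 cd) => ->; lia.
Qed.

Lemma no_tri {a b c} : e a b -> e a c -> e b c -> False.
Proof.
move=> eab eac ebc.
by case: (edge_par a ebc); rewrite (Dedge eab) (Dedge eac).
Qed.

Lemma ge2 {a b c d'} : e a b -> e c d' -> [set a; b] != [set c; d'] ->
  (2 <= D a c + D b d')%N.
Proof.
move=> eab ecd neq; rewrite leqNgt; apply/negP => h.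
case hac: (D a c) h => [|[|k]]; case hbd: (D b d') => [|[|k']] //= _.
- by move: neq; rewrite (D0E hac) (D0E hbd) eqxx.
- move: (D1E hbd) ecd; rewrite -(D0E hac) => ebd ead.
  exact: (no_tri eab ead ebd).
- move: (D1E hac) ecd; rewrite -(D0E hbd) => eac ecb.
  by apply: (no_tri (a := b) (b := a) (c := c)); rewrite // esym.
Qed.

Lemma m4_edges {a b c d'} : e a b -> e c d' -> [set a; b] != [set c; d'] ->
  m4 a b c d' = 2.
Proof.
move=> eab ecd neq; rewrite /m4 (Dedge eab) (Dedge ecd).
have g1 := ge2 eab ecd neq.
have ed : e d' c by rewrite esym.
have g2 : (2 <= D a d' + D b c)%N by apply: ge2 => //; rewrite [[set d'; c]]setUC.
lia.
Qed.

Lemma m4_diag a b : m4 a b a b = 0.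
Proof. by rewrite /m4 !D0; lia. Qed.

Lemma m4_sym a b c d' : m4 a b c d' = m4 c d' a b.
Proof.
rewrite /m4; have := Dsym a d'; have := Dsym b c; have := Dsym a c; have := Dsym b d'.
lia.
Qed.

Lemma edge_setP S : S \in edge_set e -> exists x y, [/\ e x y, x != y & S = [set x; y]].
Proof.
case/imset2P => x y _; rewrite inE => exy ->; exists x, y; split => //.
by apply/eqP => h; rewrite h eirr in exy.
Qed.

Variables i j : 'I_n.
Hypothesis d_gt1 : (1 < D i j)%N.
Local Notation d := (D i j).

Lemma ij_neq : i != j.
Proof. by apply/eqP => h; move: d_gt1; rewrite h D0. Qed.

Lemma f_notin : [set i; j] \notin edge_set e.
Proof.
apply/negP => /edge_setP[x [y [exy _ h]]].
have hi : i \in [set x; y] by rewrite -h set21.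
have hj : j \in [set x; y] by rewrite -h set22.
move: hi hj d_gt1 ij_neq; rewrite !inE => /orP[]/eqP-> /orP[]/eqP-> h1 h2;
  try by rewrite eqxx in h2.
  by move: h1; rewrite (Dedge exy).
by move: h1; rewrite Dsym (Dedge exy).
Qed.

Definition oc z := D i z + D z j == d.

Lemma parity_nat {a b c} : odd b = odd (a + c) -> a + b = c.+1 -> False.
Proof.
move=> h s; have := congr1 odd s; rewrite oddD h oddD /=.
by case: (odd a); case: (odd c).
Qed.

Lemma val_chain p z : goodp j p -> z != j ->
  m4 z (p z) i j = if oc z then d.-1 else d.+1.
Proof.
move=> gp zj; case: (gp z zj) => ezp hp.
rewrite /m4 /oc (Dedge ezp).
have t1 := Dtri i (p z) j; have t2 := Dtri i z j.
have s1 := Dsym z i; have s2 := Dsym j (p z); have s3 := Dsym j z.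
have par : odd (D z j) = odd (D z i + d) by apply: Dparity.
have s4 := Dsym (p z) i.
case: eqP => h; first lia.
have : D i z + D z j <> d.+1.
  by move=> h'; apply: (parity_nat par); rewrite s1.
lia.
Qed.

Lemma chain_surj m : (m <= d)%N -> exists z, D i z = d - m /\ oc z.
Proof.
elim: m => [|m IH] hm.
  by exists j; rewrite subn0 /oc D0 addn0.
case: (IH (ltnW hm)) => z [hz /eqP hoc].
have [w ewz hw] : exists2 w, e w z & D i w = d - m.+1.
  by apply: Dpred; rewrite hz; lia.
exists w; split => //; apply/eqP.
have := Dtri i w j; have := Dtri w z j; rewrite (Dedge (y := z)) //; lia.
Qed.

Lemma chain_inj t : forall z1 z2, oc z1 -> oc z2 -> D z1 j = t -> D z2 j = t -> z1 = z2.
Proof.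
elim: t => [|t IH] z1 z2 o1 o2 h1 h2.
  by rewrite (D0E h1) (D0E h2).
have [w1 ew1 hw1] : exists2 w, e w z1 & D j w = t by apply: Dpred; rewrite Dsym.
have [w2 ew2 hw2] : exists2 w, e w z2 & D j w = t by apply: Dpred; rewrite Dsym.
move: o1 o2; rewrite /oc => /eqP o1 /eqP o2.
have oc1 : oc w1.
  rewrite /oc; apply/eqP; have a1 := Dtri i w1 j; have a2 := Dtri i z1 w1.
  have a3 := Dsym z1 w1; have a4 := Dsym w1 j; rewrite (Dedge ew1) in a3; lia.
have oc2 : oc w2.
  rewrite /oc; apply/eqP; have a1 := Dtri i w2 j; have a2 := Dtri i z2 w2.
  have a3 := Dsym z2 w2; have a4 := Dsym w2 j; rewrite (Dedge ew2) in a3; lia.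
have ww := IH w1 w2 oc1 oc2 (etrans (Dsym _ _) hw1) (etrans (Dsym _ _) hw2).
rewrite -ww in ew2 oc2.
move: oc1 oc2; rewrite /oc => /eqP q1 /eqP q2.
have a4 := Dsym w1 j.
apply: (@uniq_parent i w1 z1 z2) => //; lia.
Qed.

Lemma card_chain : #|[set z | oc z]| = d.+1.
Proof.
pose h z : 'I_n := Ordinal (Dlt i z).
rewrite -(card_in_imset (f := h)); last first.
  move=> z1 z2; rewrite !inE => o1 o2 /(congr1 val) /= hz.
  apply: (chain_inj (D z1 j)) => //.
  by move: o1 o2; rewrite /oc => /eqP o1 /eqP o2; lia.
have hd : (d.+1 <= n)%N := Dlt i j.
have -> : h @: [set z | oc z] = widen_ord hd @: [set: 'I_d.+1].
  apply/setP => k; apply/imsetP/imsetP => [[z]|[k' _ ->]].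
    rewrite inE => o ->.
    have lt : (D i z < d.+1)%N by move: o; rewrite /oc ltnS => /eqP <-; apply: leq_addr.
    by exists (Ordinal lt); rewrite ?inE //; apply/val_inj.
  case: (chain_surj (d - k') _); first exact: leq_subr.
  move=> z [hz oz]; exists z; rewrite ?inE //.
  by apply/val_inj => /=; rewrite hz subKn // -ltnS.
by rewrite card_imset ?cardsT ?card_ord //; by move=> a b /(congr1 val) /= hab; apply: val_inj.
Qed.

Lemma sum_edges (R : zmodType) (F : nat -> R) :
  (\sum_(S in edge_set e) F (min4pc e S [set i; j]) = F d.-1 *+ d + F d.+1 *+ (n.-1 - d))%R.
Proof.
case: (exists_goodp j) => p gp.
rewrite (image_edges gp) big_imset /=; last exact: inj_edges gp.
have E : forall z, z \in [set~ j] ->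
    F (min4pc e [set z; p z] [set i; j]) = F (if oc z then d.-1 else d.+1).
  move=> z; rewrite !inE => zj; case: (gp z zj) => ezp _.
  rewrite min4pc_set2 ?ij_neq ?(val_chain p z gp zj) //.
  by apply/eqP => h; rewrite -h eirr in ezp.
rewrite (eq_bigr _ E) (bigID oc) /=.
pose A := [set z | oc z].
have -> : (\sum_(z in [set~ j] | oc z) F (if oc z then d.-1 else d.+1) =
          \sum_(z in [set~ j] :&: A) F d.-1)%R.
  by apply: eq_big => z; [rewrite /A !inE | move=> /andP[_ ->]].
have -> : (\sum_(z in [set~ j] | ~~ oc z) F (if oc z then d.-1 else d.+1) =
          \sum_(z in [set~ j] :\: A) F d.+1)%R.
  by apply: eq_big => z; [rewrite /A !inE andbC | move=> /andP[_ /negbTE ->]].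
rewrite !sumr_const.
have c1 : #|[set~ j] :&: A| = d.
  have := card_chain; rewrite (cardsD1 j) inE /oc D0 addn0 eqxx add1n => -[<-].
  by apply: eq_card => z; rewrite /A !inE andbC.
have c2 := cardsID A [set~ j].
rewrite cardsC1 card_ord c1 in c2; rewrite c1 -c2 addKn //.
Qed.


End Graph.

Local Open Scope ring_scope.

Lemma sylvester (D : idomainType) m k (U : 'M[D]_(m,k)) (V : 'M[D]_(k,m)) (y : D) :
  y != 0 -> (k <= m)%N ->
  \det (y%:M - U *m V) = y ^+ (m - k) * \det (y%:M - V *m U).
Proof.
move=> y0 km.
pose P := block_mx (y%:M : 'M_m) U V (1%:M : 'M_k).
have h1 : \det P = \det (y%:M - U *m V).
  have : P *m block_mx 1%:M 0 (- V) 1%:M = block_mx (y%:M - U *m V) U 0 1%:M.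
    by rewrite mulmx_block !mulmx1 !mulmx0 !mul1mx !add0r mulmxN addrN.

  move/(congr1 determinant); rewrite det_mulmx det_lblock !det1 !mulr1 => ->.
  by rewrite det_ublock det1 mulr1.
have h2 : y ^+ k * \det P = y ^+ m * \det (y%:M - V *m U).
  have : block_mx 1%:M 0 (- V) y%:M *m P = block_mx y%:M U 0 (y%:M - V *m U).
    rewrite mulmx_block !mul1mx !mul0mx !addr0 mulNmx mul_scalar_mx mul_mx_scalar.
    by rewrite addNr mulmx1 mulNmx addrC.
  move/(congr1 determinant); rewrite det_mulmx det_lblock det1 mul1r !det_scalar => ->.
  by rewrite det_ublock det_scalar.
have : y ^+ k * \det (y%:M - U *m V) = y ^+ k * (y ^+ (m - k) * \det (y%:M - V *m U)).
  by rewrite -h1 h2 mulrA -exprD subnKC.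
by move/mulfI; apply; rewrite expf_neq0.
Qed.

Lemma det3 (R : comRingType) (A : 'M[R]_3) :
  let a i j := A (inord i) (inord j) in
  \det A = a 0%N 0%N * (a 1%N 1%N * a 2%N 2%N - a 1%N 2%N * a 2%N 1%N)
         - a 0%N 1%N * (a 1%N 0%N * a 2%N 2%N - a 1%N 2%N * a 2%N 0%N)
         + a 0%N 2%N * (a 1%N 0%N * a 2%N 1%N - a 1%N 1%N * a 2%N 0%N).
Proof.
move=> a.
have Ax : forall x y, A x y = a x y by move=> x y; rewrite /a !inord_val.
rewrite (expand_det_row _ 0) !big_ord_recl big_ord0 /cofactor.
rewrite !(expand_det_row _ 0) !big_ord_recl !big_ord0 /cofactor !det_mx11 !mxE /=.
rewrite !Ax /= /bump /= ?addn0 ?add0n ?addn1 !expr0 !expr1 /=.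


ring.
Qed.

Lemma sum_delta (F : ringType) m (f0 : 'I_m) (G : 'I_m -> F) :
  \sum_a (a == f0)%:R * G a = G f0.
Proof.
rewrite (bigD1 f0) //= eqxx mul1r big1 ?addr0 // => a /negbTE ->; by rewrite mul0r.
Qed.

Lemma sum_delta' (F : ringType) m (f0 : 'I_m) (G : 'I_m -> F) :
  \sum_a G a * (a == f0)%:R = G f0.
Proof.
rewrite (bigD1 f0) //= eqxx mulr1 big1 ?addr0 // => a /negbTE ->; by rewrite mulr0.
Qed.

Lemma charpoly_rank3 (F : fieldType) m (M : 'M[F]_m) (f0 : 'I_m) (c : 'I_m -> F) :
  (3 <= m)%N -> c f0 = 0 ->
  (forall a b, M a b = if a == b then 0 else if a == f0 then 2 + c b
                       else if b == f0 then 2 + c a else 2) ->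
  let s := \sum_a c a in let q := \sum_a c a ^+ 2 in
  let y : {poly F} := 'X + 2%:P in
  char_poly M = y ^+ (m - 3) *
    ((y - (2 * m%:R)%:P) * (y ^+ 2 - q%:P) - 4%:P * s%:P * y - 2%:P * (s ^+ 2)%:P - 2%:P * q%:P).
Proof.
move=> m3 cf0 HM s q y.
pose U : 'M[F]_(m,3) := \matrix_(a, t) (if val t == 0%N then 1 else if val t == 1%N then c a else (a == f0)%:R).
pose V : 'M[F]_(3,m) := \matrix_(t, b) (if val t == 0%N then 2 else if val t == 1%N then (b == f0)%:R else c b).
have HUV : M = U *m V - 2%:M.
  apply/matrixP => a b; rewrite HM !mxE !big_ord_recl big_ord0 !mxE /=.
  have [<-|ab] := eqVneq a b.
    rewrite /= mulr1n; have [->|af] := eqVneq a f0; rewrite ?eqxx ?cf0 ?(negbTE af) /=; ring.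
  rewrite /= mulr0n.
  have [->|af] := eqVneq a f0; have [->|bf] := eqVneq b f0;
    rewrite ?eqxx ?cf0 ?(negbTE af) ?(negbTE bf) /=; try ring.
have Hx : char_poly_mx M = y%:M - map_mx polyC U *m map_mx polyC V.
  rewrite /char_poly_mx HUV map_mxB map_mxM; apply/matrixP => a b; rewrite !mxE.
  by case: (a == b); rewrite /= ?mulr1n ?mulr0n ?polyC0 /y; ring.
have y0 : y != 0 by rewrite -size_poly_eq0 size_XaddC.
rewrite /char_poly Hx sylvester // -map_mxM det3.
congr (_ * _).
have ie : forall a b, (a < 3)%N -> (b < 3)%N -> (inord a == inord b :> 'I_3) = (a == b).
  by move=> a b ha hb; rewrite -val_eqE /= !inordK.
have VU : forall a b, (a < 3)%N -> (b < 3)%N -> \sum_(j < m) V (inord a) j * U j (inord b) =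
   if a == 0%N then (if b == 0%N then 2 * m%:R else if b == 1%N then 2 * s else 2)
   else if a == 1%N then (if b == 0%N then 1 else if b == 1%N then 0 else 1)
   else (if b == 0%N then s else if b == 1%N then q else 0).
  move=> a b ha hb; rewrite /U /V.
  have ha' : val (inord a : 'I_3) = a by exact: inordK.
  have hb' : val (inord b : 'I_3) = b by exact: inordK.
  under eq_bigr => k _ do rewrite !mxE ha' hb'.
  clear ha' hb'; case: a ha => [|[|[|a]]] // _; case: b hb => [|[|[|b]]] // _ /=.
  all: first [ by rewrite sumr_const card_ord mulr1 mulr_natr | by rewrite /s mulr_sumr
    | by rewrite sum_delta' ?cf0 | by rewrite sum_delta ?cf0 ?eqxx
    | by rewrite /s; apply: eq_bigr => k _; rewrite mulr1
    | by rewrite /q; apply: eq_bigr => k _; rewrite expr2 | idtac ].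
rewrite !mxE !ie // !VU //= ?mulr1n ?mulr0n.
rewrite /y; ring.
Qed.

Lemma alg_s (R : comRingType) (dR nR : R) :
  (dR - 1 - 2) * dR + (dR + 1 - 2) * (nR - 1 - dR) = (dR - 3) * dR + (dR - 1) * (nR - 1 - dR).
Proof. ring. Qed.

Lemma alg_q (R : comRingType) (dR nR : R) :
  (dR - 1 - 2) ^+ 2 * dR + (dR + 1 - 2) ^+ 2 * (nR - 1 - dR) =
  (dR - 3) ^+ 2 * dR + (dR - 1) ^+ 2 * (nR - 1 - dR).
Proof. ring. Qed.

Lemma alg_final (R : fieldType) (nR dR : R) (k : nat) :
  let s := (dR - 3) * dR + (dR - 1) * (nR - 1 - dR) in
  let q := (dR - 3) ^+ 2 * dR + (dR - 1) ^+ 2 * (nR - 1 - dR) in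
  ('X + 2%:P) ^+ k *
  (('X + 2%:P - (2 * nR)%:P) * (('X + 2%:P) ^+ 2 - q%:P) -
   4%:P * s%:P * ('X + 2%:P) - 2%:P * (s ^+ 2)%:P - 2%:P * q%:P) =
  ('X + 2%:P) ^+ k *
    ('X^3 - ((2 * nR - 6)%:P * 'X^2)
    - ((nR * dR ^+ 2 - 5 * dR ^+ 2 + 2 * nR * dR - 2 * dR + 5 * nR - 9)%:P * 'X)
    - (2 * (dR - 1) ^+ 2 * (nR - 1))%:P).
Proof. move=> s q; rewrite /s /q; ring. Qed.

Theorem theorem3p4 (R : realFieldType) (n : nat) (e : rel 'I_n) (i j : 'I_n) :
  is_tree e ->
  (1 < dist e i j)%N ->
  let d := dist e i j in
  let B := edge_set e :|: [set [set i; j]] in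
  let nR : R := n%:R in
  let dR : R := d%:R in
  let g : {poly R} :=
    'X^3 - ((2 * nR - 6)%:P * 'X^2)
    - ((nR * dR ^+ 2 - 5 * dR ^+ 2 + 2 * nR * dR - 2 * dR + 5 * nR - 9)%:P * 'X)
    - (2 * (dR - 1) ^+ 2 * (nR - 1))%:P in
  char_poly (min4pc_sub R e B) = ('X + 2%:P) ^+ (n - 3) * g.
Proof.
move=> tree dgt1 d B nR dR g.
pose f := [set i; j].
have fB : f \in B by rewrite !inE eqxx orbT.
have fnot : f \notin edge_set e := f_notin _ _ tree _ _ dgt1.
have dn : (d < n)%N := Dlt _ _ tree i j.
have ijn : i != j := ij_neq _ _ _ _ dgt1.
have cardB : #|B| = n.
  rewrite /B setUC cardsU1 fnot (card_edges _ _ tree) add1n prednK //; lia.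
have n3 : (3 <= #|B|)%N by rewrite cardB; lia.
pose f0 := enum_rank_in fB f.
have vf0 : enum_val f0 = f by rewrite enum_rankK_in.
pose c' (S : {set 'I_n}) : R := if S == f then 0 else (min4pc e S f)%:R - 2.
pose c (a : 'I_#|B|) : R := c' (enum_val a).
have ceq : forall a, (a == f0) = (enum_val a == f).
  by move=> a; rewrite -vf0 (inj_eq enum_val_inj).
have inB : forall a, a != f0 -> enum_val a \in edge_set e.
  move=> a; rewrite ceq => af; have := enum_valP a; rewrite !inE (negbTE af) orbF //.
have diag : forall S, S \in B -> min4pc e S S = 0%N.
  move=> S; rewrite !inE => /orP[h|/eqP->].
    case: (edge_setP _ _ tree S h) => x [y [exy xy ->]].
    by rewrite min4pc_set2 // m4_diag.
  by rewrite min4pc_set2 // m4_diag.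
have symf : forall S, S \in edge_set e -> min4pc e f S = min4pc e S f.
  move=> S h; case: (edge_setP _ _ tree S h) => x [y [exy xy ->]].
  by rewrite !min4pc_set2 // (m4_sym _ _ tree).
have two : forall S T, S \in edge_set e -> T \in edge_set e -> S != T ->
    min4pc e S T = 2%N.
  move=> S T hS hT; case: (edge_setP _ _ tree S hS) => x [y [exy xy ->]].
  case: (edge_setP _ _ tree T hT) => x' [y' [exy' xy' ->]] neq.
  by rewrite min4pc_set2 // (m4_edges _ _ tree exy exy').
have c0 : c f0 = 0 by rewrite /c /c' vf0 eqxx.
have Hent : forall a b, min4pc_sub R e B a b = if a == b then 0 else if a == f0 then 2 + c b
                       else if b == f0 then 2 + c a else 2.
  move=> a b; rewrite mxE.
  have [<-|ab] := eqVneq a b; first by rewrite diag ?enum_valP.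
  have eab : enum_val a != enum_val b by rewrite (inj_eq enum_val_inj).
  have [af|af] := eqVneq a f0.
    have bf : b != f0 by rewrite -af eq_sym.
    rewrite af vf0 symf ?inB // /c /c'; move: bf; rewrite ceq => /negbTE ->.
    by rewrite addrC subrK.
  have [bf|bf] := eqVneq b f0.
    rewrite bf vf0 /c /c'; move: af; rewrite ceq => /negbTE ->.
    by rewrite addrC subrK.
  by rewrite two ?inB.
rewrite (@charpoly_rank3 R _ _ f0 c n3 c0 Hent) /=.
have e1 : (d.-1)%:R = dR - 1 :> R by rewrite -subn1 natrB //; lia.
have e2 : (d.+1)%:R = dR + 1 :> R by rewrite -natr1.
have e3 : (n.-1 - d)%:R = nR - 1 - dR :> R.
  by rewrite natrB -?subn1 ?natrB //; lia.
have Hsum : forall F : {set 'I_n} -> R, F f = 0 ->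
    \sum_(a < #|B|) F (enum_val a) = \sum_(S in edge_set e) F S.
  move=> F F0; rewrite -(big_enum_val F) /B setUC big_setU1 //= F0 add0r.
  by [].
have hs : \sum_(a < #|B|) c a = (dR - 3) * dR + (dR - 1) * (nR - 1 - dR).
  rewrite (Hsum c'); last by rewrite /c' eqxx.
  rewrite (eq_bigr (fun S => (min4pc e S f)%:R - 2)); last first.
    move=> S hS; have : S != f by apply: contraNneq fnot => <-.
    by rewrite /c' => /negbTE ->.
  rewrite /f (sum_edges _ _ tree _ _ dgt1 R (fun k => k%:R - 2)) e1 e2 -(mulr_natr _ d) -(mulr_natr _ (n.-1 - d)) e3 -/d -/dR.
  exact: alg_s.
have hq : \sum_(a < #|B|) c a ^+ 2 = (dR - 3) ^+ 2 * dR + (dR - 1) ^+ 2 * (nR - 1 - dR).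
  rewrite (Hsum (fun S => c' S ^+ 2)); last by rewrite /c' eqxx expr2 mul0r.
  rewrite (eq_bigr (fun S => ((min4pc e S f)%:R - 2) ^+ 2)); last first.
    move=> S hS; have : S != f by apply: contraNneq fnot => <-.
    by rewrite /c' => /negbTE ->.
  rewrite /f (sum_edges _ _ tree _ _ dgt1 R (fun k => (k%:R - 2) ^+ 2)) e1 e2 -(mulr_natr _ d) -(mulr_natr _ (n.-1 - d)) e3 -/d -/dR.
  exact: alg_q.
rewrite hs hq cardB -/nR /g.
exact: alg_final.
Qed.
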